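(* Let $\sigma_{10}=\frac{1+\sqrt5}{2}$. For $p\in\{4,5,10\}$, the group $\Gamma=\mathcal{S}(p,\sigma_{10})$ is generated by $\mathrm{Stab}_\Gamma(m(R_1))\cup\mathrm{Stab}_\Gamma(m(A))$ where $A$ is either $(R_1R_2)^5$ or $(R_1R_3)^5$. For $p=10$, $\Gamma$ is also generated by $\mathrm{Stab}_\Gamma(m(R_1))\cup\mathrm{Stab}_\Gamma(m(A))$ where $A$ is either $(R_1R_2R_3R_2^{-1})^3$ or $(R_1R_3^{-1}R_2R_3)^3$.
   Context: Let $p\ge2$ be an integer and $\tau\in\mathbb{C}$. Set $u=e^{2\pi i/(3p)}$, $\alpha=2-u^3-\bar u^3$, $\beta=(\bar u^2-u)\tau$ and $H=\begin{pmatrix}\alpha&\beta&\bar\beta\\ \bar\beta&\alpha&\beta\\ \beta&\bar\beta&\alpha\end{pmatrix}$, a Hermitian matrix (of signature $(2,1)$ for the parameters considered) defining the form $\langle X,Y\rangle=Y^*HX$. Let $R_1=\begin{pmatrix}u^2&\tau&-u\bar\tau\\0&\bar u&0\\0&0&\bar u\end{pmatrix}$, $J=\begin{pmatrix}0&0&1\\1&0&0\\0&1&0\end{pmatrix}$, $R_2=JR_1J^{-1}$, $R_3=JR_2J^{-1}$. The group $\mathcal{S}(p,\tau)$ is the subgroup of $U(H)$ generated by $R_1$ and $J$, acting on $H^2_{\mathbb{C}}=\{[X]:\langle X,X\rangle<0\}$ through its image in $PU(H)$; all statements refer to this image. The elements $R_1$ and the listed $A$ are complex reflections (non-identity elements fixing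 pointwise a complex line) in the relevant groups; $m(A)$ denotes the mirror (fixed complex line) of $A$, and $\mathrm{Stab}_\Gamma(m)$ is the setwise stabilizer of $m$ in $\Gamma$. *)

(* Defs.v *)
(* complex numbers are algC (algebraic complex numbers);
   all quantities in the statement are algebraic. *)
From HB Require Import structures.
From mathcomp Require Import all_boot all_order all_algebra all_field.
Set Implicit Arguments. Unset Strict Implicit. Unset Printing Implicit Defensive.
Import Order.TTheory GRing.Theory Num.Theory.
Local Open Scope ring_scope.

Definition mx3 (a b c d e f g h k : algC) : 'M[algC]_3 :=
  \matrix_(i < 3, j < 3)
    nth 0 (nth [::] [:: [:: a; b; c]; [:: d; e; f]; [:: g; h; k]] i) j.

(* u = exp(2 pi i/(3p)) ; (3p).-root (-1) = exp(i pi /(3p)) *)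
Definition uu (p : nat) : algC := ((3 * p)%N.-root (-1)) ^+ 2.
Definition ub (p : nat) : algC := (uu p)^*.

Definition alpha (p : nat) : algC := 2 - (uu p) ^+ 3 - (ub p) ^+ 3.
Definition beta (p : nat) (tau : algC) : algC := ((ub p) ^+ 2 - uu p) * tau.

Definition Hmat (p : nat) (tau : algC) : 'M[algC]_3 :=
  let a := alpha p in let b := beta p tau in
  mx3 a b b^* b^* a b b b^* a.

Definition hform (p : nat) (tau : algC) (X Y : 'cV[algC]_3) : algC :=
  ((map_mx (fun z : algC => z^*) Y)^T *m Hmat p tau *m X) ord0 ord0.

Definition R1 (p : nat) (tau : algC) : 'M[algC]_3 :=
  mx3 ((uu p) ^+ 2) tau (- (uu p) * tau^*)
      0 (ub p) 0
      0 0 (ub p).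

Definition Jm : 'M[algC]_3 := mx3 0 0 1 1 0 0 0 1 0.

Definition R2 (p : nat) (tau : algC) : 'M[algC]_3 := Jm *m R1 p tau *m invmx Jm.
Definition R3 (p : nat) (tau : algC) : 'M[algC]_3 := Jm *m R2 p tau *m invmx Jm.

Inductive gen (S : 'M[algC]_3 -> Prop) : 'M[algC]_3 -> Prop :=
| gen_one : gen S 1%:M
| gen_in g : S g -> gen S g
| gen_mul g h : gen S g -> gen S h -> gen S (g *m h)
| gen_inv g : gen S g -> gen S (invmx g).

Definition Gam (p : nat) (tau : algC) : 'M[algC]_3 -> Prop :=
  gen (fun g => g = R1 p tau \/ g = Jm).

(* negative vectors, i.e. representatives of points of H^2_C *)
Definition negv (p : nat) (tau : algC) (X : 'cV[algC]_3) : Prop :=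
  hform p tau X X < 0.

(* mirror of A: the set of points of H^2_C fixed by A (as a cone of
   negative vectors): [X] is fixed by A in PU(H) iff A X = lambda X *)
Definition mirror (p : nat) (tau : algC) (A : 'M[algC]_3) : 'cV[algC]_3 -> Prop :=
  fun X => negv p tau X /\ exists l : algC, A *m X = l *: X.

Definition Stab (p : nat) (tau : algC) (m : 'cV[algC]_3 -> Prop) : 'M[algC]_3 -> Prop :=
  fun g => Gam p tau g /\ forall X : 'cV[algC]_3, m X <-> m (g *m X).

(* In PU(H): the image of Gamma is generated by the image of S.
   Since S is a subset of Gamma, this means: every element of Gamma is,
   up to a nonzero scalar, a word in S (and words in S lie in Gamma). *)
Definition generated_PU (p : nat) (tau : algC) (S : 'M[algC]_3 -> Prop) : Prop :=
  (forall g, gen S g -> Gam p tau g) /\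
  (forall g, Gam p tau g -> exists d c, gen S d /\ c != 0 /\ g = c *: d).

Definition gen_by_mirror_stabs (p : nat) (tau : algC) (A : 'M[algC]_3) : Prop :=
  generated_PU p tau
    (fun g => Stab p tau (mirror p tau (R1 p tau)) g \/ Stab p tau (mirror p tau A) g).

Definition sigma10 : algC := (1 + sqrtC 5) / 2.

(* Main.v *)
Require Import Defs.
From HB Require Import structures.
From mathcomp Require Import all_boot all_order all_algebra all_field.
From mathcomp Require Import zify ssrZ ring.
From Stdlib Require BinInt.
Import Order.TTheory GRing.Theory Num.Theory.
Local Open Scope ring_scope.
Set Implicit Arguments. Unset Strict Implicit. Unset Printing Implicit Defensive.

Definition z0 : BinNums.Z := BinNums.Z0.
Definition z1 : BinNums.Z := BinNums.Zpos BinNums.xH.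
Definition zm1 : BinNums.Z := BinNums.Zneg BinNums.xH.
Definition zR (z : BinNums.Z) : algC := (int_of_Z z)%:~R.
Lemma zR_add a b : zR (BinInt.Z.add a b) = zR a + zR b.
Proof. by rewrite /zR -intrD -rmorphD. Qed.
Lemma zR_mul a b : zR (BinInt.Z.mul a b) = zR a * zR b.
Proof. by rewrite /zR -intrM -rmorphM. Qed.
Lemma zR_opp a : zR (BinInt.Z.opp a) = - zR a.
Proof. by rewrite /zR -intrN -rmorphN. Qed.
Lemma zR0 : zR z0 = 0. Proof. by []. Qed.
Lemma zR1 : zR z1 = 1. Proof. by rewrite /zR /=. Qed.
Lemma zR_real z : zR z \is Num.real. Proof. by rewrite /zR realz. Qed.

Definition Cf := (BinNums.Z * BinNums.Z)%type.
Definition c0 : Cf := (z0, z0).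
Definition cadd (a b : Cf) : Cf := (BinInt.Z.add a.1 b.1, BinInt.Z.add a.2 b.2).
Definition copp (a : Cf) : Cf := (BinInt.Z.opp a.1, BinInt.Z.opp a.2).
Definition cmul (a b : Cf) : Cf :=
  (BinInt.Z.add (BinInt.Z.mul a.1 b.1) (BinInt.Z.mul a.2 b.2),
   BinInt.Z.add (BinInt.Z.add (BinInt.Z.mul a.1 b.2) (BinInt.Z.mul a.2 b.1)) (BinInt.Z.mul a.2 b.2)).
Definition cisz (a : Cf) : bool := BinInt.Z.eqb a.1 0 && BinInt.Z.eqb a.2 0.

Definition Pl := seq Cf.
Fixpoint padd (x y : Pl) : Pl :=
  match x, y with
  | [::], _ => y
  | _, [::] => x
  | a :: x', b :: y' => cadd a b :: padd x' y'
  end.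
Definition popp (x : Pl) : Pl := map copp x.
Definition pscale (c : Cf) (y : Pl) : Pl := map (cmul c) y.
Definition pmul0 (x y : Pl) : Pl :=
  foldr (fun c acc => padd (pscale c y) (c0 :: acc)) [::] x.
Fixpoint redf (n k : nat) (x : Pl) : Pl :=
  match k with
  | 0 => x
  | k'.+1 => if leq (size x) n then x
             else padd (take n x) (popp (redf n k' (drop n x)))
  end.
Definition red n x := redf n (size x) x.
Definition pmul n x y := red n (pmul0 x y).
Definition pisz (x : Pl) : bool := all cisz x.
Definition rinv n : Pl := rcons (nseq n.-1 c0) (copp (z1, z0)).
Definition pconj n (x : Pl) : Pl :=
  foldr (fun c acc => padd [:: c] (pmul n (rinv n) acc)) [::] x.

Section Eval.
Variables (n : nat) (r t : algC).
Hypothesis rn : r ^+ n = -1.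
Hypothesis tt : t ^+ 2 = t + 1.

Definition evc (c : Cf) : algC := zR c.1 + zR c.2 * t.
Fixpoint evp (x : Pl) : algC :=
  match x with [::] => 0 | c :: x' => evc c + r * evp x' end.

Lemma evc0 : evc c0 = 0. Proof. by rewrite /evc /= zR0 mul0r addr0. Qed.
Lemma evc_add a b : evc (cadd a b) = evc a + evc b.
Proof. rewrite /evc /= !zR_add; ring. Qed.
Lemma evc_opp a : evc (copp a) = - evc a.
Proof. rewrite /evc /= !zR_opp; ring. Qed.
Lemma evc_mul a b : evc (cmul a b) = evc a * evc b.
Proof.
apply/eqP; rewrite -subr_eq0; apply/eqP.
have -> : evc (cmul a b) - evc a * evc b = - (zR a.2 * zR b.2 * (t ^+ 2 - t - 1)).
  by rewrite /evc /= !zR_add !zR_mul; ring.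
by rewrite tt; ring.
Qed.

Lemma evp_add x y : evp (padd x y) = evp x + evp y.
Proof.
elim: x y => [|a x IH] [|b y] /=; rewrite ?add0r ?addr0 //.
by rewrite IH evc_add mulrDr; ring.
Qed.
Lemma evp_opp x : evp (popp x) = - evp x.
Proof. elim: x => [|a x IH] /=; rewrite ?oppr0 // IH evc_opp; ring. Qed.
Lemma evp_scale c y : evp (pscale c y) = evc c * evp y.
Proof. elim: y => [|a y IH] /=; rewrite ?mulr0 // IH evc_mul; ring. Qed.
Lemma evp_mul0 x y : evp (pmul0 x y) = evp x * evp y.
Proof.
elim: x => [|a x IH] /=; first by rewrite mul0r.
by rewrite evp_add evp_scale /= evc0 IH; ring.
Qed.
Lemma evp_take_drop k x : evp x = evp (take k x) + r ^+ k * evp (drop k x).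
Proof.
elim: k x => [|k IH] [|a x] /=; rewrite ?take0 ?drop0 /= ?mul1r ?mulr0 ?addr0 ?add0r //.
by rewrite IH exprS; ring.
Qed.
Lemma evp_redf k x : evp (redf n k x) = evp x.
Proof.
elim: k x => [|k IH] x //=; case: ifP => // _.
by rewrite evp_add evp_opp IH [in RHS](evp_take_drop n) rn; ring.
Qed.
Lemma evp_red x : evp (red n x) = evp x. Proof. exact: evp_redf. Qed.
Lemma evp_mul x y : evp (pmul n x y) = evp x * evp y.
Proof. by rewrite /pmul evp_red evp_mul0. Qed.
Lemma evp_pisz x : pisz x -> evp x = 0.
Proof.
elim: x => [|a x IH] //= /andP[ha hx]; rewrite IH // mulr0 addr0.
case: a ha => [a1 a2] /andP[/BinInt.Z.eqb_spec /= -> /BinInt.Z.eqb_spec /= ->]; exact: evc0.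
Qed.
Lemma evp_nseq0 k l : evp (nseq k c0 ++ l) = r ^+ k * evp l.
Proof. elim: k => [|k IH] /=; rewrite ?mul1r // evc0 add0r IH exprS; ring. Qed.

Hypothesis rconj : r^* = - r ^+ n.-1.
Hypothesis tconj : t^* = t.
Lemma evp_rinv : evp (rinv n) = r^*.
Proof.
rewrite /rinv -cats1 evp_nseq0 /= evc_opp /evc /= zR1 zR0 mul0r addr0 mulr0 addr0 rconj.
ring.
Qed.
Lemma evc_conj c : (evc c)^* = evc c.
Proof.
rewrite /evc rmorphD rmorphM /=. by rewrite tconj !conj_Creal ?zR_real.
Qed.
Lemma evp_conj x : evp (pconj n x) = (evp x)^*.
Proof.
elim: x => [|a x IH]; first by rewrite /= rmorph0.
have -> : pconj n (a :: x) = padd [:: a] (pmul n (rinv n) (pconj n x)) by [].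
rewrite evp_add evp_mul evp_rinv IH /= mulr0 addr0 rmorphD rmorphM /= evc_conj.
by rewrite mulrC.
Qed.
End Eval.


Lemma mx3_mul (a b c d e f g h k a' b' c' d' e' f' g' h' k' : algC) :
  mx3 a b c d e f g h k *m mx3 a' b' c' d' e' f' g' h' k' =
  mx3 (a*a' + b*d' + c*g') (a*b' + b*e' + c*h') (a*c' + b*f' + c*k')
      (d*a' + e*d' + f*g') (d*b' + e*e' + f*h') (d*c' + e*f' + f*k')
      (g*a' + h*d' + k*g') (g*b' + h*e' + k*h') (g*c' + h*f' + k*k').
Proof.
apply/matrixP => i j; rewrite !mxE !big_ord_recl big_ord0 !mxE /=.
by case: i => [[|[|[|?]]] ?]; case: j => [[|[|[|?]]] ?] //=; rewrite addr0 addrA.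
Qed.

Lemma mx3_1 : mx3 1 0 0 0 1 0 0 0 1 = 1%:M.
Proof.
apply/matrixP => i j; rewrite !mxE.
by case: i => [[|[|[|?]]] ?]; case: j => [[|[|[|?]]] ?].
Qed.

Lemma mx3_tr_conj (a b c d e f g h k : algC) :
  (map_mx (fun z : algC => z^*) (mx3 a b c d e f g h k))^T =
  mx3 a^* d^* g^* b^* e^* h^* c^* f^* k^*.
Proof.
apply/matrixP => i j; rewrite !mxE.
by case: i => [[|[|[|?]]] ?]; case: j => [[|[|[|?]]] ?].
Qed.

Lemma mx3_scale (s a b c d e f g h k : algC) :
  s *: mx3 a b c d e f g h k = mx3 (s*a) (s*b) (s*c) (s*d) (s*e) (s*f) (s*g) (s*h) (s*k).
Proof.
apply/matrixP => i j; rewrite !mxE.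
by case: i => [[|[|[|?]]] ?]; case: j => [[|[|[|?]]] ?].
Qed.


Definition ct (g : 'M[algC]_3) : 'M[algC]_3 := (map_mx (fun z : algC => z^*) g)^T.

Lemma ctM (a b : 'M[algC]_3) : ct (a *m b) = ct b *m ct a.
Proof. by rewrite /ct -trmx_mul; congr (_^T); apply: (map_mxM Num.conj). Qed.
Lemma ct1 : ct 1%:M = 1%:M.
Proof. by rewrite /ct (map_mx1 Num.conj) trmx1. Qed.

Definition unit_H p tau (g : 'M[algC]_3) :=
  ct g *m Hmat p tau *m g = Hmat p tau /\ g \in unitmx.

Lemma unit_H_mul p tau a b : unit_H p tau a -> unit_H p tau b -> unit_H p tau (a *m b).
Proof.
move=> [ha ua] [hb ub]; split; last by rewrite unitmx_mul ua ub.
rewrite ctM.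
have -> : ct b *m ct a *m Hmat p tau *m (a *m b) = ct b *m (ct a *m Hmat p tau *m a) *m b.
  by rewrite !mulmxA.
by rewrite ha hb.
Qed.

Lemma unit_H_inv p tau a : unit_H p tau a -> unit_H p tau (invmx a).
Proof.
move=> [ha ua]; split; last by rewrite unitmx_inv.
rewrite -{1}ha !mulmxA -ctM mulmxV // ct1 mul1mx -mulmxA mulmxV // mulmx1.
by [].
Qed.

Lemma Gam_unit p tau g : unit_H p tau (R1 p tau) -> unit_H p tau Jm ->
  Gam p tau g -> unit_H p tau g.
Proof.
move=> h1 hJ; elim=> [| g' [->|->] | a b _ ha _ hb | a _ ha] //.
- by split; [rewrite ct1 mul1mx mulmx1 | exact: unitmx1].
- exact: unit_H_mul.
- exact: unit_H_inv.
Qed.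

Lemma hform_unit p tau g X : unit_H p tau g -> hform p tau (g *m X) (g *m X) = hform p tau X X.
Proof.
move=> [hg _]; rewrite /hform.
have -> : (map_mx (fun z : algC => z^*) (g *m X))^T = (map_mx (fun z : algC => z^*) X)^T *m ct g.
  by rewrite -trmx_mul /ct; congr (_^T); apply: (map_mxM Num.conj).
rewrite -[in RHS]hg. by rewrite !mulmxA.
Qed.

Lemma Stab_comm p tau A g : unit_H p tau (R1 p tau) -> unit_H p tau Jm ->
  Gam p tau g -> g *m A = A *m g -> Stab p tau (mirror p tau A) g.
Proof.
move=> h1 hJ hg hc; have [hu uu] := Gam_unit h1 hJ hg.
split=> // X; rewrite /mirror /negv hform_unit //; split=> -[hn [l hl]]; split=> //.
- by exists l; rewrite mulmxA -hc -mulmxA hl scalemxAr.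
- exists l; apply: (can_inj (mulKmx uu)).
  by rewrite -scalemxAr -hl !mulmxA hc.
Qed.

Inductive letter := La | LA | Lj | LJ.
Definition letM p tau (l : letter) : 'M[algC]_3 :=
  match l with La => R1 p tau | LA => invmx (R1 p tau) | Lj => Jm | LJ => invmx Jm end.
Definition wordM p tau (w : seq letter) := foldl (fun M l => M *m letM p tau l) 1%:M w.

Lemma Gam_foldl p tau w M : Gam p tau M -> Gam p tau (foldl (fun M l => M *m letM p tau l) M w).
Proof.
elim: w M => [|l w IH] M hM //=; apply: IH; apply: gen_mul => //.
case: l => /=; do ?apply: gen_inv; apply: gen_in; by [left|right].
Qed.
Lemma Gam_word p tau w : Gam p tau (wordM p tau w).
Proof. apply: Gam_foldl; exact: gen_one. Qed.

Definition prodM p tau (ws : seq (bool * seq letter)) :=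
  foldl (fun M bw => M *m wordM p tau bw.2) 1%:M ws.

Lemma gen_prod (S : 'M[algC]_3 -> Prop) p tau (ws : seq (bool * seq letter)) M :
  (forall bw, List.In bw ws -> S (wordM p tau bw.2)) -> gen S M ->
  gen S (foldl (fun M bw => M *m wordM p tau bw.2) M ws).
Proof.
elim: ws M => [|bw ws IH] M hS hM //=; apply: IH.
  by move=> x hx; apply: hS; right.
by apply: gen_mul => //; apply: gen_in; apply: hS; left.
Qed.

Lemma generic p tau A (ws : seq (bool * seq letter)) (c : algC) :
  unit_H p tau (R1 p tau) -> unit_H p tau Jm ->
  (forall bw, List.In bw ws -> if bw.1 then wordM p tau bw.2 *m R1 p tau = R1 p tau *m wordM p tau bw.2
                        else wordM p tau bw.2 *m A = A *m wordM p tau bw.2) ->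
  c != 0 -> Jm = c *: prodM p tau ws ->
  gen_by_mirror_stabs p tau A.
Proof.
move=> h1 hJ hws hc hJw.
set S := (fun g => Stab p tau (mirror p tau (R1 p tau)) g \/ Stab p tau (mirror p tau A) g).
have SG : forall g, gen S g -> Gam p tau g.
  move=> g0; elim=> [|g [[hg _]|[hg _]] | a b _ ha _ hb | a _ ha].
  - exact: gen_one.
  - exact: hg.
  - exact: hg.
  - exact: gen_mul.
  - exact: gen_inv.
split=> // g; elim=> [| g' [->|->] | a b _ [da [ca [gda [cna ->]]]] _ [db [cb [gdb [cnb ->]]]]
                     | a _ [da [ca [gda [cna ->]]]]].
- by exists 1%:M, 1; rewrite scale1r oner_eq0; split=> //; exact: gen_one.
- exists (R1 p tau), 1; rewrite scale1r oner_eq0; split=> //; apply: gen_in; left.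
  by apply: Stab_comm => //; apply: gen_in; left.
- exists (prodM p tau ws), c; split=> //; apply: gen_prod; last exact: gen_one.
  move=> bw hbw; have := hws bw hbw; case: bw.1 => hcomm; [left|right];
  by apply: Stab_comm => //; apply: Gam_word.
- exists (da *m db), (ca * cb); split; first exact: gen_mul.
  by rewrite mulf_neq0 //= -scalemxAl -scalemxAr scalerA.
- have ud : da \in unitmx by have [] := Gam_unit h1 hJ (SG _ gda).
  exists (invmx da), ca^-1; split; first exact: gen_inv.
  rewrite invr_eq0 cna; split=> //; rewrite invmxZ // unitmxZ // unitfE //.
Qed.


Inductive M3 := mk3 of Pl & Pl & Pl & Pl & Pl & Pl & Pl & Pl & Pl.

Definition dot3 n (x1 x2 x3 y1 y2 y3 : Pl) : Pl :=
  red n (padd (pmul0 x1 y1) (padd (pmul0 x2 y2) (pmul0 x3 y3))).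
Definition mulM n (X Y : M3) : M3 :=
  let: mk3 a b c d e f g h k := X in
  let: mk3 a' b' c' d' e' f' g' h' k' := Y in
  mk3 (dot3 n a b c a' d' g') (dot3 n a b c b' e' h') (dot3 n a b c c' f' k')
      (dot3 n d e f a' d' g') (dot3 n d e f b' e' h') (dot3 n d e f c' f' k')
      (dot3 n g h k a' d' g') (dot3 n g h k b' e' h') (dot3 n g h k c' f' k').
Definition ctE n (X : M3) : M3 :=
  let: mk3 a b c d e f g h k := X in
  mk3 (pconj n a) (pconj n d) (pconj n g) (pconj n b) (pconj n e) (pconj n h)
      (pconj n c) (pconj n f) (pconj n k).
Definition scE n (s : Pl) (X : M3) : M3 :=
  let: mk3 a b c d e f g h k := X in
  mk3 (pmul n s a) (pmul n s b) (pmul n s c) (pmul n s d) (pmul n s e) (pmul n s f)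
      (pmul n s g) (pmul n s h) (pmul n s k).
Definition eqPl n (G x y : Pl) : bool := pisz (red n (pmul0 (padd x (popp y)) G)).
Definition eqM n G (X Y : M3) : bool :=
  let: mk3 a b c d e f g h k := X in
  let: mk3 a' b' c' d' e' f' g' h' k' := Y in
  [&& eqPl n G a a', eqPl n G b b', eqPl n G c c', eqPl n G d d', eqPl n G e e',
      eqPl n G f f', eqPl n G g g', eqPl n G h h' & eqPl n G k k'].

Definition oneP : Pl := [:: (z1, z0)].
Definition I3 : M3 := mk3 oneP [::] [::] [::] oneP [::] [::] [::] oneP.

Section EvM.
Variables (n : nat) (r t : algC).
Hypothesis rn : r ^+ n = -1.
Hypothesis tt : t ^+ 2 = t + 1.
Hypothesis rconj : r^* = - r ^+ n.-1.
Hypothesis tconj : t^* = t.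

Local Notation evp := (evp r t).
Definition evM (X : M3) : 'M[algC]_3 :=
  let: mk3 a b c d e f g h k := X in
  mx3 (evp a) (evp b) (evp c) (evp d) (evp e) (evp f) (evp g) (evp h) (evp k).

Lemma evM_mk3 a b c d e f g h k :
  evM (mk3 a b c d e f g h k) = mx3 (evp a) (evp b) (evp c) (evp d) (evp e) (evp f) (evp g) (evp h) (evp k).
Proof. by []. Qed.

Lemma evp_dot3 x1 x2 x3 y1 y2 y3 :
  evp (dot3 n x1 x2 x3 y1 y2 y3) = evp x1 * evp y1 + evp x2 * evp y2 + evp x3 * evp y3.
Proof. by rewrite /dot3 evp_red // !evp_add // !evp_mul0 // addrA. Qed.

Lemma evM_mul X Y : evM (mulM n X Y) = evM X *m evM Y.
Proof. by case: X => *; case: Y => *; rewrite /= mx3_mul !evp_dot3. Qed.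

Lemma evM_ct X : ct (evM X) = evM (ctE n X).
Proof. by case: X => *; rewrite /ct /= mx3_tr_conj !evp_conj. Qed.

Lemma evM_sc s X : evM (scE n s X) = evp s *: evM X.
Proof. by case: X => *; rewrite /= mx3_scale !evp_mul. Qed.

Lemma evp_one : evp oneP = 1.
Proof. by rewrite /= /evc /= zR1 zR0 mul0r mulr0 !addr0. Qed.

Lemma evM_I3 : evM I3 = 1%:M.
Proof.
change (mx3 (evp oneP) (evp [::]) (evp [::]) (evp [::]) (evp oneP) (evp [::]) (evp [::]) (evp [::]) (evp oneP) = 1%:M).
by rewrite evp_one mx3_1.
Qed.

Variable G : Pl.
Hypothesis G0 : evp G != 0.
Lemma eqPl_ev x y : eqPl n G x y -> evp x = evp y.
Proof.
move=> /(evp_pisz r t); rewrite evp_red // evp_mul0 // evp_add // evp_opp //.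
by move/eqP; rewrite mulf_eq0 (negbTE G0) orbF subr_eq0 => /eqP.
Qed.
Lemma eqM_ev X Y : eqM n G X Y -> evM X = evM Y.
Proof.
case: X => a b c d e f g h k; case: Y => a' b' c' d' e' f' g' h' k' /=.
by move=> /and5P[h1 h2 h3 h4 /and5P[h5 h6 h7 h8 h9]]; congr mx3; apply: eqPl_ev.
Qed.
End EvM.


Definition uE : Pl := [:: c0; c0; (z1, z0)].
Definition ubE n := pconj n uE.
Definition R1E n (tE : Pl) : M3 :=
  mk3 (pmul n uE uE) tE (popp (pmul n uE (pconj n tE)))
      [::] (ubE n) [::] [::] [::] (ubE n).
Definition R1iE n (tE : Pl) : M3 :=
  let ub2 := pmul n (ubE n) (ubE n) in
  mk3 ub2 (popp (pmul n (pmul n tE ub2) uE)) (pmul n (pmul n (pmul n uE (pconj n tE)) ub2) uE)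
      [::] uE [::] [::] [::] uE.
Definition JE : M3 := mk3 [::] [::] oneP oneP [::] [::] [::] oneP [::].
Definition JiE : M3 := mk3 [::] oneP [::] [::] [::] oneP oneP [::] [::].
Definition HE n (tE : Pl) : M3 :=
  let u := uE in let ub := ubE n in
  let al := padd (padd oneP oneP) (popp (padd (pmul n u (pmul n u u)) (pmul n ub (pmul n ub ub)))) in
  let be := pmul n (padd (pmul n ub ub) (popp u)) tE in
  mk3 al be (pconj n be) (pconj n be) al be be (pconj n be) al.
Definition letE n tE (l : letter) : M3 :=
  match l with La => R1E n tE | LA => R1iE n tE | Lj => JE | LJ => JiE end.
Definition wordE n tE (w : seq letter) : M3 := foldl (fun M l => mulM n M (letE n tE l)) I3 w.
Definition prodE n tE (ws : seq (bool * seq letter)) : M3 :=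
  foldl (fun M bw => mulM n M (wordE n tE bw.2)) I3 ws.
Fixpoint powE n (X : M3) (k : nat) : M3 :=
  match k with 0 => I3 | k'.+1 => mulM n X (powE n X k') end.

Definition check n tE G (AE : M3) (ws : seq (bool * seq letter)) (cE : Pl) : bool :=
  [&& eqM n G (mulM n (R1E n tE) (R1iE n tE)) I3,
      eqM n G (mulM n (mulM n (ctE n (R1E n tE)) (HE n tE)) (R1E n tE)) (HE n tE),
      eqM n G (mulM n (mulM n (ctE n JE) (HE n tE)) JE) (HE n tE),
      all (fun bw => let W := wordE n tE bw.2 in
                     if bw.1 then eqM n G (mulM n W (R1E n tE)) (mulM n (R1E n tE) W)
                     else eqM n G (mulM n W AE) (mulM n AE W)) ws &
      eqM n G JE (scE n cE (prodE n tE ws))].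

Lemma inv_of_mul (A B : 'M[algC]_3) : A *m B = 1%:M -> invmx A = B.
Proof.
move=> hAB; have [uA _] := mulmx1_unit hAB.
by rewrite -[B](mulKmx uA) hAB mulmx1.
Qed.

Lemma J_mul : Jm *m mx3 0 1 0 0 0 1 1 0 0 = 1%:M.
Proof.
rewrite /Jm mx3_mul -mx3_1.
by congr mx3; rewrite ?mul0r ?mul1r ?mulr0 ?mulr1 ?addr0 ?add0r.
Qed.

Lemma L_Ji : invmx Jm = mx3 0 1 0 0 0 1 1 0 0.
Proof. exact: inv_of_mul J_mul. Qed.

Lemma allIn (T : Type) (P : pred T) (ws : seq T) x : all P ws -> List.In x ws -> P x.
Proof. elim: ws => [|y ws IH] //= /andP[hy hws] [<-|hx] //; exact: IH. Qed.

Section Inst.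
Variables (p n : nat) (r s : algC) (tE G : Pl).
Hypothesis rn : r ^+ n = -1.
Hypothesis tt : s ^+ 2 = s + 1.
Hypothesis rconj : r^* = - r ^+ n.-1.
Hypothesis tconj : s^* = s.
Hypothesis hu : uu p = r ^+ 2.
Hypothesis htau : evp r s tE = s.
Hypothesis hG : evp r s G != 0.
Local Notation ev := (evp r s).
Local Notation evM := (evM r s).

Lemma ev_uE : ev uE = uu p.
Proof. rewrite hu /= /evc /= zR1 !zR0. ring. Qed.
Lemma ev_ubE : ev (ubE n) = ub p.
Proof. by rewrite /ubE evp_conj // ev_uE. Qed.

Lemma L_R1 : R1 p s = evM (R1E n tE).
Proof.
rewrite /R1 /R1E evM_mk3 !evp_opp !evp_mul // !evp_conj // ev_uE.
by rewrite /ub htau expr2 mulNr.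
Qed.

Lemma L_H : Hmat p s = evM (HE n tE).
Proof.
rewrite /Hmat /HE evM_mk3 /ubE.
do 4 rewrite ?evp_add ?evp_opp ?evp_mul ?evp_conj //.
rewrite ev_uE htau evp_one /alpha /beta /ub; congr mx3; ring.
Qed.

Lemma L_J : Jm = evM JE.
Proof.
change (Jm = mx3 (ev [::]) (ev [::]) (ev oneP) (ev oneP) (ev [::]) (ev [::]) (ev [::]) (ev oneP) (ev [::])).
by rewrite evp_one.
Qed.

Lemma L_Ji' : invmx Jm = evM JiE.
Proof.
change (invmx Jm = mx3 (ev [::]) (ev oneP) (ev [::]) (ev [::]) (ev [::]) (ev oneP) (ev oneP) (ev [::]) (ev [::])).
by rewrite evp_one L_Ji.
Qed.

Hypothesis hR1i : eqM n G (mulM n (R1E n tE) (R1iE n tE)) I3.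
Lemma L_R1i : invmx (R1 p s) = evM (R1iE n tE).
Proof.
apply: inv_of_mul; rewrite L_R1 -(evM_mul rn tt) // (eqM_ev rn tt hG hR1i).
exact: evM_I3.
Qed.

Lemma L_let l : letM p s l = evM (letE n tE l).
Proof. case: l; [exact: L_R1 | exact: L_R1i | exact: L_J | exact: L_Ji']. Qed.

Lemma L_word w : wordM p s w = evM (wordE n tE w).
Proof.
rewrite /wordM /wordE -(evM_I3 r s); elim: w I3 => [|l w IH] M //=.
by rewrite -IH L_let evM_mul.
Qed.

Lemma L_prod ws : prodM p s ws = evM (prodE n tE ws).
Proof.
rewrite /prodM /prodE -(evM_I3 r s); elim: ws I3 => [|bw ws IH] M //=.
by rewrite -IH L_word evM_mul.
Qed.

Lemma L_pow X k : evM X ^+ k = evM (powE n X k).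
Proof.
elim: k => [|k IH]; first by rewrite expr0; exact: (esym (evM_I3 r s)).
by rewrite exprS IH -mulmxE -(evM_mul rn tt).
Qed.
End Inst.

Lemma inst p n r s tE G A AE ws cE :
  r ^+ n = -1 -> s ^+ 2 = s + 1 -> r^* = - r ^+ n.-1 -> s^* = s ->
  uu p = r ^+ 2 -> evp r s tE = s -> evp r s G != 0 -> evp r s cE != 0 ->
  A = evM r s AE -> check n tE G AE ws cE ->
  gen_by_mirror_stabs p s A.
Proof.
move=> rn tt rc tc hu ht hG hc hA /and5P[hR1i hH1 hHJ hws hJw].
have E := eqM_ev rn tt hG.
have LR1 := L_R1 rn tt rc tc hu ht.
have LH := L_H rn tt rc tc hu ht.
have LJ := L_J r s.
have Lw := L_word rn tt rc tc hu ht hG hR1i.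
have Lp := L_prod rn tt rc tc hu ht hG hR1i.
have EM := evM_mul rn tt.
apply: (@generic p s A ws (evp r s cE)) => //.
- split.
    by rewrite LH LR1 (evM_ct rn tt rc tc) -!EM (E _ _ hH1).
  apply: (mulmx1_unit (B := evM r s (R1iE n tE)) _).1.
  by rewrite LR1 -EM (E _ _ hR1i) evM_I3.
- split; last exact: (mulmx1_unit J_mul).1.
  by rewrite LH LJ (evM_ct rn tt rc tc) -!EM (E _ _ hHJ).
- move=> [b w] hin; have /= := allIn hws hin.
  rewrite hA Lw LR1.
  by case: b {hin} => /E hE; rewrite -!EM hE.
- by rewrite LJ Lp -(evM_sc rn tt) (E _ _ hJw).
Qed.


Definition tauS : Pl := [:: (z0, z1)].
Definition w_X : seq letter := [:: LA; Lj; LA; LJ; LA; Lj; LA; LJ].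
Definition w_Y : seq letter := [:: Lj; La; LJ; La; Lj; La; LJ; La; Lj].
Definition w_Z : seq letter := [:: LJ; LA; Lj; LA; LJ; LA; Lj; LA].
Definition A12E n tE := powE n (mulM n (R1E n tE) (mulM n (mulM n JE (R1E n tE)) JiE)) 5.
Definition A13E n tE := powE n (mulM n (R1E n tE) (mulM n (mulM n JE (mulM n (mulM n JE (R1E n tE)) JiE)) JiE)) 5.

Lemma chk4a : check 12 tauS oneP (A12E 12 tauS) [:: (false, w_X); (true, w_Y)] oneP.
Proof. vm_compute. reflexivity. Qed.
Lemma chk4b : check 12 tauS oneP (A13E 12 tauS) [:: (true, w_Y); (false, w_Z)] oneP.
Proof. vm_compute. reflexivity. Qed.
Lemma chk5a : check 15 tauS oneP (A12E 15 tauS) [:: (false, w_X); (true, w_Y)] oneP.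
Proof. vm_compute. reflexivity. Qed.
Lemma chk5b : check 15 tauS oneP (A13E 15 tauS) [:: (true, w_Y); (false, w_Z)] oneP.
Proof. vm_compute. reflexivity. Qed.


Definition mono (k : nat) (c : Cf) : Pl := rcons (nseq k c0) c.
Definition tau10 : Pl := padd (mono 0 (z1,z0)) (padd (mono 12 (z1,z0)) (mono 18 (zm1,z0))).
Definition G10 : Pl := pmul 30 (padd oneP (mono 2 (z1,z0)))
   (pmul 30 (padd oneP (mono 6 (z1,z0))) (padd oneP (mono 10 (z1,z0)))).
Definition c10 : Pl := mono 10 (zm1, z0).
Definition R2E n tE := mulM n (mulM n JE (R1E n tE)) JiE.
Definition R3E n tE := mulM n (mulM n JE (R2E n tE)) JiE.
Definition R2iE n tE := mulM n (mulM n JE (R1iE n tE)) JiE.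
Definition R3iE n tE := mulM n (mulM n JE (R2iE n tE)) JiE.
Definition At1E n tE := powE n (mulM n (mulM n (mulM n (R1E n tE) (R2E n tE)) (R3E n tE)) (R2iE n tE)) 3.
Definition At2E n tE := powE n (mulM n (mulM n (mulM n (R1E n tE) (R3iE n tE)) (R2E n tE)) (R3E n tE)) 3.
Definition wY' := [:: LJ; La; Lj; La; LJ; La; Lj; La; LJ].
Definition wX1 := [:: La; Lj; La; Lj; LA; LJ; LA; LJ].
Definition wX2 := [:: Lj; La; LJ; La; Lj; La; Lj; LA].
Definition wX3 := [:: LA; Lj; La; Lj; La; LJ; La; Lj].
Definition wX4 := [:: LJ; LA; LJ; LA; Lj; La; Lj].
Definition wY'' := [:: La; LJ; La; Lj; La; LJ; La; Lj; La; LJ].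

Lemma chk10a : check 30 tau10 G10 (A12E 30 tau10) [:: (false, [:: Lj])] oneP.
Proof. vm_compute. reflexivity. Qed.
Lemma chk10b : check 30 tau10 G10 (A13E 30 tau10) [:: (false, [:: Lj])] oneP.
Proof. vm_compute. reflexivity. Qed.
Lemma chk10c : check 30 tau10 G10 (At1E 30 tau10) [:: (true, wY'); (false, wX1); (true, wY'); (false, wX2)] c10.
Proof. vm_compute. reflexivity. Qed.
Lemma chk10d : check 30 tau10 G10 (At2E 30 tau10) [:: (false, wX3); (true, wY'); (false, wX4); (true, wY'')] c10.
Proof. vm_compute. reflexivity. Qed.


Lemma conj_inv (J X : 'M[algC]_3) : J \in unitmx -> X \in unitmx ->
  invmx (J *m X *m invmx J) = J *m invmx X *m invmx J.
Proof.
move=> uJ uX; apply: inv_of_mul.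
rewrite !mulmxA -(mulmxA _ (invmx J) J) mulVmx // mulmx1 -(mulmxA _ X) mulmxV // mulmx1.
exact: mulmxV.
Qed.

Section Forms.
Variables (p n : nat) (r s : algC) (tE G : Pl).
Hypothesis rn : r ^+ n = -1.
Hypothesis tt : s ^+ 2 = s + 1.
Hypothesis rconj : r^* = - r ^+ n.-1.
Hypothesis tconj : s^* = s.
Hypothesis hu : uu p = r ^+ 2.
Hypothesis htau : evp r s tE = s.
Hypothesis hG : evp r s G != 0.
Hypothesis hR1i : eqM n G (mulM n (R1E n tE) (R1iE n tE)) I3.
Local Notation evM := (evM r s).

Let LR1 := L_R1 rn tt rconj tconj hu htau.
Let LR1i := L_R1i rn tt rconj tconj hu htau hG hR1i.
Let LJ := L_J r s.
Let LJi := L_Ji' r s.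
Let EM := evM_mul rn tt.
Let uJ : Jm \in unitmx := (mulmx1_unit J_mul).1.
Let uR1 : R1 p s \in unitmx.
Proof.
apply: (mulmx1_unit (B := evM (R1iE n tE)) _).1.
by rewrite LR1 -EM (eqM_ev rn tt hG hR1i) evM_I3.
Qed.

Lemma L_R2 : R2 p s = evM (R2E n tE).
Proof. by rewrite /R2 LR1 LJi LJ -!EM. Qed.
Lemma L_R3 : R3 p s = evM (R3E n tE).
Proof. by rewrite /R3 L_R2 LJi LJ -!EM. Qed.
Lemma L_R2i : invmx (R2 p s) = evM (R2iE n tE).
Proof. by rewrite /R2 conj_inv // LR1i LJi LJ -!EM. Qed.
Lemma L_R3i : invmx (R3 p s) = evM (R3iE n tE).
Proof.
rewrite /R3 conj_inv //; last by rewrite /R2 !unitmx_mul uJ uR1 unitmx_inv uJ.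
by rewrite -/(R2 p s) L_R2i LJi LJ -!EM.
Qed.

Lemma L_A12 : (R1 p s *m R2 p s) ^+ 5 = evM (A12E n tE).
Proof. by rewrite L_R2 LR1 -EM (L_pow rn tt). Qed.
Lemma L_A13 : (R1 p s *m R3 p s) ^+ 5 = evM (A13E n tE).
Proof. by rewrite L_R3 LR1 -EM (L_pow rn tt). Qed.
Lemma L_At1 : (R1 p s *m R2 p s *m R3 p s *m invmx (R2 p s)) ^+ 3 = evM (At1E n tE).
Proof. by rewrite L_R2i L_R3 L_R2 LR1 -!EM (L_pow rn tt). Qed.
Lemma L_At2 : (R1 p s *m invmx (R3 p s) *m R2 p s *m R3 p s) ^+ 3 = evM (At2E n tE).
Proof. by rewrite L_R3i L_R3 L_R2 LR1 -!EM (L_pow rn tt). Qed.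
End Forms.


Lemma sqrt_lb (a b : nat) (x : algC) : 0 <= x ->
  (a ^ 2)%:R <= (b ^ 2)%:R * x -> a%:R <= b%:R * sqrtC x.
Proof.
move=> x0 h.
have -> : b%:R * sqrtC x = sqrtC ((b ^ 2)%:R * x).
  by rewrite sqrtCM ?nnegrE ?ler0n // natrX sqrCK ?ler0n.
rewrite -[a%:R]sqrCK ?ler0n // -natrX ler_sqrtC // nnegrE ?ler0n //.
by rewrite mulr_ge0 ?ler0n.
Qed.

Lemma sqrt_ub (a b : nat) (x : algC) : 0 <= x ->
  (b ^ 2)%:R * x <= (a ^ 2)%:R -> b%:R * sqrtC x <= a%:R.
Proof.
move=> x0 h.
have -> : b%:R * sqrtC x = sqrtC ((b ^ 2)%:R * x).
  by rewrite sqrtCM ?nnegrE ?ler0n // natrX sqrCK ?ler0n.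
rewrite -[a%:R]sqrCK ?ler0n // -natrX ler_sqrtC // nnegrE ?ler0n //.
by rewrite mulr_ge0 ?ler0n.
Qed.

Definition S5 : algC := sqrtC 5.
Definition S3 : algC := sqrtC 3.
Definition SS : algC := sqrtC (3 - sigma10).

Lemma S5_ge0 : 0 <= S5. Proof. by rewrite sqrtC_ge0 ler0n. Qed.
Lemma S3_ge0 : 0 <= S3. Proof. by rewrite sqrtC_ge0 ler0n. Qed.
Lemma S5_lb : 222%:R <= 100%:R * S5.
Proof. by apply: sqrt_lb; rewrite ?ler0n // -natrM ler_nat. Qed.
Lemma S5_ub : 100%:R * S5 <= 224%:R.
Proof. by apply: sqrt_ub; rewrite ?ler0n // -natrM ler_nat. Qed.
Lemma S3_lb : 173%:R <= 100%:R * S3.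
Proof. by apply: sqrt_lb; rewrite ?ler0n // -natrM ler_nat. Qed.

Lemma sig_eq : 200%:R * sigma10 = 100%:R + 100%:R * S5.
Proof. rewrite /sigma10 -/S5. have -> : (200%:R : algC) = 100%:R * 2%:R by rewrite -natrM. by field. Qed.
Lemma sig_lb : 322%:R <= 200%:R * sigma10.
Proof. rewrite sig_eq; have -> : (322%:R : algC) = 100%:R + 222%:R by rewrite -natrD. by rewrite lerD2l S5_lb. Qed.
Lemma sig_ub : 200%:R * sigma10 <= 324%:R.
Proof. rewrite sig_eq; have -> : (324%:R : algC) = 100%:R + 224%:R by rewrite -natrD. by rewrite lerD2l S5_ub. Qed.
Lemma sig_ge0 : 0 <= sigma10.
Proof. by rewrite /sigma10 divr_ge0 ?ler0n // addr_ge0 ?ler01 // -/S5 S5_ge0. Qed.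

Lemma sig_ub2 : 10000%:R * sigma10 <= 16200%:R.
Proof.
have -> : (10000%:R : algC) * sigma10 = 50%:R * (200%:R * sigma10) by rewrite mulrA -natrM.
have -> : (16200%:R : algC) = 50%:R * 324%:R by rewrite -natrM.
by rewrite ler_pM2l ?ltr0n // sig_ub.
Qed.
Lemma sig_lb2 : 16100%:R <= 10000%:R * sigma10.
Proof.
have -> : (10000%:R : algC) * sigma10 = 50%:R * (200%:R * sigma10) by rewrite mulrA -natrM.
have -> : (16100%:R : algC) = 50%:R * 322%:R by rewrite -natrM.
by rewrite ler_pM2l ?ltr0n // sig_lb.
Qed.
Lemma three_sig_ge0 : 0 <= 3 - sigma10.
Proof.
rewrite subr_ge0 -(ler_pM2l (_ : 0 < 10000%:R)) ?ltr0n //.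
apply: le_trans sig_ub2 _; by rewrite -natrM ler_nat.
Qed.
Lemma SS_ge0 : 0 <= SS. Proof. by rewrite sqrtC_ge0 three_sig_ge0. Qed.
Lemma SS_lb : 117%:R <= 100%:R * SS.
Proof.
apply: sqrt_lb; first exact: three_sig_ge0.
have -> : ((100 ^ 2)%:R : algC) = 10000%:R by [].
rewrite mulrBr -natrM lerBrDr.
apply: (@le_trans _ _ (13689%:R + 16200%:R)); last by rewrite -natrD ler_nat.
by rewrite lerD ?sig_ub2 // ler_nat.
Qed.

Lemma A_lb : 39553%:R <= 10000%:R * (sigma10 * S3 + SS).
Proof.
have h1 : 55706%:R <= (200%:R * sigma10) * (100%:R * S3).
  have -> : (55706%:R : algC) = 322%:R * 173%:R by rewrite -natrM.
  by rewrite ler_pM ?ler0n ?sig_lb ?S3_lb.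
have h2 : (200%:R * sigma10) * (100%:R * S3) = 2%:R * (10000%:R * (sigma10 * S3)) by ring.
have h3 : 27853%:R <= 10000%:R * (sigma10 * S3).
  by rewrite -(ler_pM2l (_ : 0 < 2%:R)) ?ltr0n // -h2 -natrM.
have h4 : 11700%:R <= 10000%:R * SS.
  have -> : (10000%:R : algC) * SS = 100%:R * (100%:R * SS) by rewrite mulrA -natrM.
  have -> : (11700%:R : algC) = 100%:R * 117%:R by rewrite -natrM.
  by rewrite ler_pM2l ?ltr0n // SS_lb.
rewrite mulrDr; have -> : (39553%:R : algC) = 27853%:R + 11700%:R by rewrite -natrD.
exact: lerD.
Qed.

Lemma B_ge0 : 0 <= SS * S3 - sigma10.
Proof.
rewrite subr_ge0 -(ler_pM2l (_ : 0 < 10000%:R)) ?ltr0n //.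
apply: le_trans sig_ub2 _.
have -> : (10000%:R : algC) * (SS * S3) = (100%:R * SS) * (100%:R * S3) by ring.
apply: le_trans (_ : 117%:R * 173%:R <= _); first by rewrite -natrM ler_nat.
by rewrite ler_pM ?ler0n ?SS_lb ?S3_lb.
Qed.

Lemma sig_tt : sigma10 ^+ 2 = sigma10 + 1.
Proof.
have h5 : sqrtC (5 : algC) ^+ 2 = 5 := sqrtCK _.
apply/eqP; rewrite -subr_eq0; apply/eqP.
have -> : sigma10 ^+ 2 - (sigma10 + 1) = (sqrtC 5 ^+ 2 - 5) / 4.
  by rewrite /sigma10; field.
by rewrite h5 subrr mul0r.
Qed.

Definition vv : algC := (sigma10 + 'i * SS) / 2.
Definition ww : algC := (S3 - 'i) / 2.
Definition yy : algC := vv * ww.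

Lemma S3_real : S3 \is Num.real. Proof. by rewrite sqrtC_real ?ler0n. Qed.
Lemma SS_real : SS \is Num.real. Proof. by rewrite sqrtC_real ?three_sig_ge0. Qed.
Lemma sig_real : sigma10 \is Num.real. Proof. exact: ger0_real sig_ge0. Qed.

Lemma yy_eq : yy = (sigma10 * S3 + SS) / 4 + 'i * ((SS * S3 - sigma10) / 4).
Proof.
apply/eqP; rewrite -subr_eq0; apply/eqP.
have -> : yy - ((sigma10 * S3 + SS) / 4 + 'i * ((SS * S3 - sigma10) / 4)) =
          ('i ^+ 2 + 1) * (- SS) / 4 by rewrite /yy /vv /ww; field.
by rewrite sqrCi addNr mul0r mul0r.
Qed.

Lemma r4 : (4%:R : algC)^-1 \is Num.real. Proof. by rewrite realV realn. Qed.
Lemma a_real : (sigma10 * S3 + SS) / 4 \is Num.real.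
Proof. apply: realM (r4); apply: realD SS_real; exact: realM sig_real S3_real. Qed.
Lemma b_real : (SS * S3 - sigma10) / 4 \is Num.real.
Proof. apply: realM (r4); apply: realB sig_real; exact: realM SS_real S3_real. Qed.
Lemma Re_yy : 'Re yy = (sigma10 * S3 + SS) / 4.
Proof. by rewrite yy_eq Re_rect // ?a_real ?b_real. Qed.
Lemma Im_yy : 0 <= 'Im yy.
Proof.
rewrite yy_eq Im_rect ?a_real ?b_real //.
by rewrite divr_ge0 ?ler0n ?B_ge0.
Qed.

Lemma vv2 : vv ^+ 2 = sigma10 * vv - 1.
Proof.
apply/eqP; rewrite -subr_eq0; apply/eqP.
have -> : vv ^+ 2 - (sigma10 * vv - 1) = (- sigma10 ^+ 2 + 'i ^+ 2 * SS ^+ 2 + 4) / 4.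
  by rewrite /vv; field.
rewrite sqrCi /SS sqrtCK sig_tt; by field.
Qed.
Lemma vv5 : vv ^+ 5 = -1.
Proof.
have v3 : vv ^+ 3 = sigma10 * vv - sigma10.
  rewrite exprS vv2 mulrBr mulrCA -expr2 vv2.
  have -> : sigma10 * (sigma10 * vv - 1) - vv * 1 = sigma10 ^+ 2 * vv - sigma10 - vv by ring.
  rewrite sig_tt; ring.
have v4 : vv ^+ 4 = vv - sigma10.
  rewrite exprS v3 mulrBr mulrCA -expr2 vv2.
  have -> : sigma10 * (sigma10 * vv - 1) - vv * sigma10 = (sigma10 ^+ 2 - sigma10) * vv - sigma10 by ring.
  rewrite sig_tt; ring.
rewrite exprS v4 mulrBr -expr2 vv2; ring.
Qed.
Lemma ww3 : ww ^+ 3 = - 'i.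
Proof.
apply/eqP; rewrite -subr_eq0; apply/eqP.
have -> : ww ^+ 3 - - 'i = ((S3 ^+ 2 - 3) * (S3 - 3%:R * 'i) + ('i ^+ 2 + 1) * (3%:R * S3 - 'i)) / 8.
  by rewrite /ww; field.
by rewrite sqrCi /S3 sqrtCK !subrr addNr !mul0r addr0 mul0r.
Qed.
Lemma yy30 : yy ^+ 30 = -1.
Proof.
rewrite /yy exprMn.
have -> : vv ^+ 30 = (vv ^+ 5) ^+ 6 by rewrite -exprM.
have -> : ww ^+ 30 = (ww ^+ 3) ^+ 10 by rewrite -exprM.
rewrite vv5 ww3.
have -> : (- 'i : algC) ^+ 10 = ((- 'i) ^+ 2) ^+ 5 by rewrite -exprM.
rewrite sqrrN sqrCi; ring.
Qed.

Lemma normsub1 (z : algC) : `|z| = 1 -> `|z - 1| ^+ 2 = 2 - (z + z^*).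
Proof.
move=> hz; have zz : z * z^* = 1 by rewrite -normCK hz expr1n.
rewrite normCK rmorphB /= rmorph1.
transitivity (z * z^* - z - z^* + 1); first by ring.
by rewrite zz; ring.
Qed.

Lemma pow_dist (z : algC) (k : nat) : `|z| = 1 -> `|z ^+ k - 1| <= k%:R * `|z - 1|.
Proof.
move=> hz; elim: k => [|k IH]; first by rewrite expr0 subrr normr0 mul0r.
have -> : z ^+ k.+1 - 1 = z * (z ^+ k - 1) + (z - 1) by rewrite exprS; ring.
apply: le_trans (ler_normD _ _) _.
rewrite normrM hz mul1r -addn1 natrD mulrDl mul1r.
by rewrite lerD2r.
Qed.

Definition rr : algC := 30.-root (-1).
Lemma rr30 : rr ^+ 30 = -1. Proof. by rewrite rootCK. Qed.
Lemma rr_norm : `|rr| = 1.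
Proof.
apply/eqP; rewrite -(pexpr_eq1 (_ : (0 < 30)%nat)) ?normr_ge0 // -normrX rr30 normrN normr1 //.
Qed.

Lemma D_bound : 20000%:R * `|rr - 1| ^+ 2 <= 447%:R.
Proof.
have hRe : 'Re yy <= 'Re rr := rootC_Re_max (isT : (0 < 30)%nat) yy30 Im_yy.
rewrite Re_yy ReE in hRe.
rewrite normsub1 ?rr_norm //.
set x := rr + rr^* in hRe *; set a := sigma10 * S3 + SS in hRe *.
have hx : a <= 2%:R * x.
  have := hRe; rewrite -(ler_pM2l (_ : 0 < 4%:R)) ?ltr0n //.
  have -> : (4%:R : algC) * (a / 4%:R) = a by rewrite mulrC divfK // pnatr_eq0.
  have -> : (4%:R : algC) * (x / 2%:R) = 2%:R * x.
    have -> : (4%:R : algC) = 2%:R * 2%:R by rewrite -natrM.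
    by rewrite -mulrA [_ * (x / _)]mulrC divfK // pnatr_eq0.
  by [].
have h1 : 10000%:R * a <= 10000%:R * (2%:R * x) := ler_wpM2l (ler0n _ _) hx.
have e1 : (10000%:R : algC) * (2%:R * x) = 20000%:R * x.
  by rewrite (_ : 20000%N = (10000 * 2)%N) // natrM mulrA.
have h2 : 39553%:R <= 20000%:R * x by rewrite -e1; exact: (le_trans A_lb h1).
rewrite mulrBr lerBlDr.
apply: (@le_trans _ _ (447%:R + 39553%:R)); last by rewrite lerD2l.
by rewrite -natrM -natrD ler_nat.
Qed.


Lemma powk_bound (k : nat) : 20000%:R * `|rr ^+ k - 1| ^+ 2 <= (k ^ 2 * 447)%:R.
Proof.
case: k => [|k]; first by rewrite expr0 subrr normr0 expr2 !mulr0 ler0n.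
have h := pow_dist k.+1 rr_norm.
have h2 : `|rr ^+ k.+1 - 1| ^+ 2 <= (k.+1%:R * `|rr - 1|) ^+ 2.
  by apply: lerXn2r; rewrite ?nnegrE ?mulr_ge0 ?ler0n ?normr_ge0.
apply: (@le_trans _ _ (20000%:R * (k.+1%:R * `|rr - 1|) ^+ 2)).
  by rewrite ler_pM2l ?ltr0n.
rewrite exprMn mulrCA natrM natrX.
by rewrite ler_pM2l ?exprn_gt0 ?ltr0n ?D_bound.
Qed.

Lemma rk_neq (k : nat) : (k ^ 2 * 447 < 80000)%N -> rr ^+ k != -1.
Proof.
move=> hk; apply/eqP => e; have := powk_bound k; rewrite e.
have -> : `|-1 - 1 : algC| ^+ 2 = 4%:R.
  have -> : (-1 - 1 : algC) = - 2%:R by rewrite -opprD.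
  by rewrite normrN normr_nat -natrX.
by rewrite -natrM ler_nat leqNgt hk.
Qed.

Definition zz : algC := rr ^+ 12.
Lemma zz5 : zz ^+ 5 = 1.
Proof. by rewrite /zz -exprM (exprM rr 30 2) rr30 sqrrN expr1n. Qed.
Lemma zz_norm : `|zz| = 1. Proof. by rewrite /zz normrX rr_norm expr1n. Qed.
Lemma zz_conj : zz^* = zz ^+ 4.
Proof.
have h1 : zz * zz^* = 1 by rewrite -normCK zz_norm expr1n.
have h2 : zz * zz ^+ 4 = 1 by rewrite -exprS zz5.
have nz : zz != 0 by rewrite -normr_eq0 zz_norm oner_eq0.
by apply: (mulfI nz); rewrite h1 h2.
Qed.
Lemma zz_neq1 : zz != 1.
Proof.
apply/eqP => e; have : rr ^+ 6 != -1 by apply: rk_neq.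
rewrite -rr30; have -> : rr ^+ 30 = zz ^+ 2 * rr ^+ 6 by rewrite /zz -!exprM -exprD.
by rewrite e expr1n mul1r eqxx.
Qed.
Lemma zz_phi : 1 + zz + zz ^+ 2 + zz ^+ 3 + zz ^+ 4 = 0.
Proof.
have h : (zz - 1) * (1 + zz + zz ^+ 2 + zz ^+ 3 + zz ^+ 4) = 0.
  have -> : (zz - 1) * (1 + zz + zz ^+ 2 + zz ^+ 3 + zz ^+ 4) = zz ^+ 5 - 1 by ring.
  by rewrite zz5 subrr.
by move/eqP: h; rewrite mulf_eq0 subr_eq0 (negbTE zz_neq1) => /eqP.
Qed.

Definition ss : algC := zz + zz ^+ 4.
Lemma ss_quad : ss ^+ 2 + ss - 1 = 0.
Proof.
have -> : ss ^+ 2 + ss - 1 = (1 + zz + zz ^+ 2 + zz ^+ 3 + zz ^+ 4) + (zz ^+ 5 - 1) * (2%:R + zz ^+ 3).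
  by rewrite /ss; ring.
by rewrite zz_phi zz5 subrr mul0r addr0.
Qed.

Lemma ss_pos : 0 < ss + sigma10.
Proof.
have hs : ss = 2 - `|zz - 1| ^+ 2 by rewrite normsub1 ?zz_norm // zz_conj /ss; ring.
have hb := powk_bound 12; rewrite -/zz in hb.
rewrite -(pmulr_rgt0 _ (_ : 0 < 20000%:R)) ?ltr0n // hs.
have -> : (20000%:R : algC) * (2 - `|zz - 1| ^+ 2 + sigma10) =
          (40000%:R + 100%:R * (200%:R * sigma10)) - 20000%:R * `|zz - 1| ^+ 2.
  have -> : (40000%:R : algC) = 20000%:R * 2 by rewrite -natrM.
  have -> : (20000%:R : algC) = 100%:R * 200%:R by rewrite -natrM.
  ring.
rewrite subr_gt0; apply: le_lt_trans hb _.
apply: (@lt_le_trans _ _ (40000%:R + 100%:R * 322%:R)).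
  by rewrite -natrM -natrD ltr_nat.
by rewrite lerD2l ler_pM2l ?ltr0n ?sig_lb.
Qed.

Lemma ss_val : ss = sigma10 - 1.
Proof.
have h : (ss - sigma10 + 1) * (ss + sigma10) = 0.
  have -> : (ss - sigma10 + 1) * (ss + sigma10) = (ss ^+ 2 + ss - 1) - (sigma10 ^+ 2 - sigma10 - 1) by ring.
  by rewrite ss_quad sig_tt; ring.
move/eqP: h; rewrite mulf_eq0 (gt_eqF ss_pos) orbF => /eqP h.
by apply/eqP; rewrite -subr_eq0; rewrite -h; apply/eqP; ring.
Qed.

Lemma root_rn (n : nat) : (0 < n)%nat -> (n.-root (-1 : algC)) ^+ n = -1.
Proof. by move=> hn; rewrite rootCK. Qed.

Lemma root_conj (n : nat) (r : algC) : (0 < n)%nat -> r ^+ n = -1 -> r^* = - r ^+ n.-1.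
Proof.
move=> hn rn.
have nr : `|r| = 1.
  apply/eqP; rewrite -(pexpr_eq1 hn) ?normr_ge0 // -normrX rn normrN normr1 //.
have rr : r * r^* = 1 by rewrite -normCK nr expr1n.
have rnS : r ^+ n = r * r ^+ n.-1 by rewrite -exprS prednK.
have h1 : r * (- r ^+ n.-1) = 1 by rewrite mulrN -rnS rn opprK.
by rewrite -[r^*]mulr1 -h1 mulrA (mulrC r^*) rr mul1r.
Qed.

Lemma sig_conj : sigma10^* = sigma10.
Proof.
apply: conj_Creal; rewrite /sigma10 rpredM ?rpredV ?rpredD ?rpred1 ?sqrtC_real //.
Qed.

Lemma ev_tauS r : evp r sigma10 tauS = sigma10.
Proof. by rewrite /= /evc /= zR0 zR1 mul1r add0r mulr0 addr0. Qed.
Lemma ev_oneP r : evp r sigma10 oneP != 0.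
Proof. by rewrite (evp_one r sigma10) oner_eq0. Qed.

Lemma case45 (p : nat) A (n := (3 * p)%N) : (0 < p)%nat ->
  check n tauS oneP (A12E n tauS) [:: (false, w_X); (true, w_Y)] oneP ->
  check n tauS oneP (A13E n tauS) [:: (true, w_Y); (false, w_Z)] oneP ->
  A = (R1 p sigma10 *m R2 p sigma10) ^+ 5 \/ A = (R1 p sigma10 *m R3 p sigma10) ^+ 5 ->
  gen_by_mirror_stabs p sigma10 A.
Proof.
move=> hp c1 c2 hA.
have hn : (0 < n)%nat by rewrite /n muln_gt0.
set r := n.-root (-1 : algC).
have rn : r ^+ n = -1 by exact: root_rn.
have rc := root_conj hn rn.
have hu : uu p = r ^+ 2 by [].
case: hA => ->.
- apply: (inst rn sig_tt rc sig_conj hu (ev_tauS r) (ev_oneP r) (ev_oneP r) _ c1).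
  exact: (L_A12 rn sig_tt rc sig_conj hu (ev_tauS r)).
- apply: (inst rn sig_tt rc sig_conj hu (ev_tauS r) (ev_oneP r) (ev_oneP r) _ c2).
  exact: (L_A13 rn sig_tt rc sig_conj hu (ev_tauS r)).
Qed.




Lemma evp_mono r t k c : evp r t (mono k c) = r ^+ k * evc t c.
Proof. by rewrite /mono -cats1 evp_nseq0 /= mulr0 addr0. Qed.
Lemma evc10 t : evc t (z1, z0) = 1.
Proof. by rewrite /evc /= zR1 zR0 mul0r addr0. Qed.
Lemma evcm10 t : evc t (zm1, z0) = -1.
Proof. by rewrite /evc /= zR0 mul0r addr0 /zR /=. Qed.

Definition r10 : algC := rr.
Lemma tau10_ok : evp r10 sigma10 tau10 = sigma10.
Proof.
have e18 : rr ^+ 18 = - zz ^+ 4.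
  by rewrite /zz -exprM (exprD rr 30 18) rr30 mulN1r opprK.
rewrite /tau10 !evp_add !evp_mono evc10 evcm10 /r10.
rewrite expr0 mul1r !mulr1 mulrN1 e18 opprK -/zz -/ss ss_val.
by rewrite addrC subrK.
Qed.
Lemma one_plus (k : nat) : (k ^ 2 * 447 < 80000)%N -> 1 + rr ^+ k != 0.
Proof.
move=> hk; apply: contra (rk_neq hk) => /eqP h; apply/eqP.
by rewrite -(addKr 1 (rr ^+ k)) h addr0.
Qed.
Lemma G10_ok : evp r10 sigma10 G10 != 0.
Proof.
have rn : r10 ^+ 30 = -1 := rr30.
rewrite /G10 !(evp_mul rn sig_tt) !evp_add !evp_mono (evp_one r10 sigma10) evc10 !mulr1 /r10.
by rewrite !mulf_neq0 // one_plus.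
Qed.
Lemma c10_ok : evp r10 sigma10 c10 != 0.
Proof.
rewrite /c10 evp_mono evcm10 mulrN1 oppr_eq0 expf_eq0 /=.
by rewrite -normr_eq0 /r10 rr_norm oner_eq0.
Qed.

Theorem theorem11p3 :
  (forall p : nat, p \in [:: 4%N; 5%N; 10%N] ->
    forall A : 'M[algC]_3,
      A = (R1 p sigma10 *m R2 p sigma10) ^+ 5 \/
      A = (R1 p sigma10 *m R3 p sigma10) ^+ 5 ->
      gen_by_mirror_stabs p sigma10 A) /\
  (forall A : 'M[algC]_3,
      A = (R1 10 sigma10 *m R2 10 sigma10 *m R3 10 sigma10 *m invmx (R2 10 sigma10)) ^+ 3 \/
      A = (R1 10 sigma10 *m invmx (R3 10 sigma10) *m R2 10 sigma10 *m R3 10 sigma10) ^+ 3 ->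
      gen_by_mirror_stabs 10 sigma10 A).
Proof.
have rn : r10 ^+ 30 = -1 by exact: root_rn.
have rc := root_conj (isT : (0 < 30)%nat) rn.
have hu : uu 10 = r10 ^+ 2 by [].
have h1 : eqM 30 G10 (mulM 30 (R1E 30 tau10) (R1iE 30 tau10)) I3 by case/and5P: chk10a.
split.
  move=> p; rewrite !inE => /or3P[/eqP->|/eqP->|/eqP->] A hA.
  - exact: (@case45 4 A isT chk4a chk4b hA).
  - exact: (@case45 5 A isT chk5a chk5b hA).
  case: hA => ->.
  - exact: (@inst 10 30 r10 sigma10 tau10 G10 _ (A12E 30 tau10) [:: (false, [:: Lj])] oneP
      rn sig_tt rc sig_conj hu tau10_ok G10_ok (ev_oneP r10)
      (L_A12 rn sig_tt rc sig_conj hu tau10_ok) chk10a).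
  - exact: (@inst 10 30 r10 sigma10 tau10 G10 _ (A13E 30 tau10) [:: (false, [:: Lj])] oneP
      rn sig_tt rc sig_conj hu tau10_ok G10_ok (ev_oneP r10)
      (L_A13 rn sig_tt rc sig_conj hu tau10_ok) chk10b).
move=> A; case=> ->.
- exact: (@inst 10 30 r10 sigma10 tau10 G10 _ (At1E 30 tau10) _ c10
      rn sig_tt rc sig_conj hu tau10_ok G10_ok c10_ok
      (L_At1 rn sig_tt rc sig_conj hu tau10_ok G10_ok h1) chk10c).
- exact: (@inst 10 30 r10 sigma10 tau10 G10 _ (At2E 30 tau10) _ c10
      rn sig_tt rc sig_conj hu tau10_ok G10_ok c10_ok
      (L_At2 rn sig_tt rc sig_conj hu tau10_ok G10_ok h1) chk10d).
Qed.
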